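(* Let $X$ be a finite connected poset. Then $\mathcal{P}(X)\subseteq\mathcal{AM}(X)$.
   Context: For $x<y$ in $X$, $e_{xy}$ denotes the incidence-algebra basis element and $B=\{e_{xy}:x<y\}$. $\mathcal{C}(X)$ is the set of maximal chains. For a bijection $\theta:B\to B$ and $C:u_1<\dots<u_m$ in $\mathcal{C}(X)$, $\theta$ is increasing on $C$ if there is $D:v_1<\dots<v_m$ in $\mathcal{C}(X)$ with $\theta(e_{u_iu_j})=e_{v_iv_j}$ for all $i<j$, decreasing if $\theta(e_{u_iu_j})=e_{v_{m-j+1}v_{m-i+1}}$ for all $i<j$. $\mathcal{M}(X)$: bijections $B\to B$ increasing or decreasing on every maximal chain. A walk is a sequence $u_0,\dots,u_m$ where for each $i$ one of $u_i,u_{i+1}$ covers the other; closed if $u_0=u_m$. For a closed walk $\Gamma:u_0,\dots,u_m=u_0$ and $z\in X$: $s^+_{\theta,\Gamma}(z)=|\{i: u_i<u_{i+1},\ \exists w>z,\ \theta(e_{zw})=e_{u_iu_{i+1}}\}|$, $s^-_{\theta,\Gamma}(z)=|\{i: u_i>u_{i+1},\ \exists w>z,\ \theta(e_{zw})=e_{u_{i+1}u_i}\}|$, $t^+_{\theta,\Gamma}(z)=|\{i: u_i<u_{i+1},\ \exists w<z,\ \theta(e_{wz})=e_{u_iu_{i+1}}\}|$, $t^-_{\theta,\Gamma}(z)=|\{i: u_i>u_{i+1},\ \exists w<z,\ \theta(e_{wz})=e_{u_{i+1}u_i}\}|$, $0\le i\le m-1$. $\theta$ is admissible if $s^+-s^-=t^+-t^-$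 at every $z$ for every closed walk; $\mathcal{AM}(X)$ is the set of admissible elements of $\mathcal{M}(X)$. $\theta:B\to B$ is proper if there is an automorphism $\lambda$ of $X$ with $\theta(e_{xy})=e_{\lambda(x)\lambda(y)}$ for all $x<y$, or an anti-automorphism $\lambda$ with $\theta(e_{xy})=e_{\lambda(y)\lambda(x)}$ for all $x<y$; $\mathcal{P}(X)$ is the set of proper bijections. *)

(* Defs.v *)
From HB Require Import structures.
From mathcomp Require Import all_boot all_order all_algebra.
Set Implicit Arguments. Unset Strict Implicit. Unset Printing Implicit Defensive.
Import Order.Theory.

Local Open Scope order_scope.

Section Incidence.
Context {d : Order.disp_t} (X : finPOrderType d).

(* B = { e_xy : x < y }, the element e_xy represented by the pair (x, y). *)
Definition B := {p : X * X | p.1 < p.2}.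

Definition covers (x y : X) : bool := (x < y) && [forall z : X, ~~ ((x < z) && (z < y))].

Definition adj (x y : X) : bool := covers x y || covers y x.

(* a walk u_0, u_1, ..., u_m is given by u_0 and the list [u_1; ...; u_m] *)
Definition walk (u0 : X) (s : seq X) : bool := path adj u0 s.

Definition closed_walk (u0 : X) (s : seq X) : bool := walk u0 s && (last u0 s == u0).

Definition connected_poset : Prop :=
  forall x y : X, exists s : seq X, walk x s && (last x s == y).

Definition chain (s : seq X) : bool := sorted (fun a b => a < b) s.

Definition maximal_chain (s : seq X) : Prop :=
  chain s /\ forall t : seq X, chain t -> {subset s <= t} -> {subset t <= s}.

(* theta(e_{u_i u_j}) = e_{v_i v_j} for all i < j (0-indexed) *)
Definition increasing_on (theta : B -> B) (C : seq X) : Prop :=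
  exists D : seq X, maximal_chain D /\ size D = size C /\
    forall (i j : nat) (b : B), i < j < size C ->
      val b = (nth (val b).1 C i, nth (val b).1 C j) ->
      val (theta b) = (nth (val b).1 D i, nth (val b).1 D j).

(* theta(e_{u_i u_j}) = e_{v_{m-j+1} v_{m-i+1}} (1-indexed), i.e.
   e_{v_{m-1-j} v_{m-1-i}} (0-indexed) *)
Definition decreasing_on (theta : B -> B) (C : seq X) : Prop :=
  exists D : seq X, maximal_chain D /\ size D = size C /\
    forall (i j : nat) (b : B), i < j < size C ->
      val b = (nth (val b).1 C i, nth (val b).1 C j) ->
      val (theta b) = (nth (val b).1 D (size C - 1 - j),
                       nth (val b).1 D (size C - 1 - i)).

Definition in_M (theta : B -> B) : Prop :=
  bijective theta /\
  forall C : seq X, maximal_chain C -> increasing_on theta C \/ decreasing_on theta C.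

Definition step_up (u0 : X) (s : seq X) (i : nat) : bool :=
  nth u0 (u0 :: s) i < nth u0 (u0 :: s) i.+1.
Definition step_down (u0 : X) (s : seq X) (i : nat) : bool :=
  nth u0 (u0 :: s) i > nth u0 (u0 :: s) i.+1.

Definition s_plus (theta : B -> B) (u0 : X) (s : seq X) (z : X) : nat :=
  count (fun i => step_up u0 s i &&
     [exists b : B, ((val b).1 == z) &&
        (val (theta b) == (nth u0 (u0 :: s) i, nth u0 (u0 :: s) i.+1))])
    (iota 0 (size s)).
Definition s_minus (theta : B -> B) (u0 : X) (s : seq X) (z : X) : nat :=
  count (fun i => step_down u0 s i &&
     [exists b : B, ((val b).1 == z) &&
        (val (theta b) == (nth u0 (u0 :: s) i.+1, nth u0 (u0 :: s) i))])
    (iota 0 (size s)).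
Definition t_plus (theta : B -> B) (u0 : X) (s : seq X) (z : X) : nat :=
  count (fun i => step_up u0 s i &&
     [exists b : B, ((val b).2 == z) &&
        (val (theta b) == (nth u0 (u0 :: s) i, nth u0 (u0 :: s) i.+1))])
    (iota 0 (size s)).
Definition t_minus (theta : B -> B) (u0 : X) (s : seq X) (z : X) : nat :=
  count (fun i => step_down u0 s i &&
     [exists b : B, ((val b).2 == z) &&
        (val (theta b) == (nth u0 (u0 :: s) i.+1, nth u0 (u0 :: s) i))])
    (iota 0 (size s)).

Definition admissible (theta : B -> B) : Prop :=
  forall (u0 : X) (s : seq X), closed_walk u0 s -> forall z : X,
    ((s_plus theta u0 s z)%:Z - (s_minus theta u0 s z)%:Z =
     (t_plus theta u0 s z)%:Z - (t_minus theta u0 s z)%:Z)%R.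

Definition in_AM (theta : B -> B) : Prop := in_M theta /\ admissible theta.

Definition automorphism (lam : X -> X) : Prop :=
  bijective lam /\ forall x y : X, (x <= y) = (lam x <= lam y).
Definition anti_automorphism (lam : X -> X) : Prop :=
  bijective lam /\ forall x y : X, (x <= y) = (lam y <= lam x).

Definition proper (theta : B -> B) : Prop :=
  (exists lam : X -> X, automorphism lam /\
     forall b : B, val (theta b) = (lam (val b).1, lam (val b).2)) \/
  (exists lam : X -> X, anti_automorphism lam /\
     forall b : B, val (theta b) = (lam (val b).2, lam (val b).1)).

Definition in_P (theta : B -> B) : Prop := bijective theta /\ proper theta.

End Incidence.

(* Main.v *)
Require Import Defs.
From mathcomp Require Import all_boot all_order all_algebra.
From mathcomp Require Import zify.
Import Order.Theory.

Lemma count_split (T : eqType) (l : seq T) (P P' Q : pred T) :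
  (forall i, i \in l -> P i (+) P' i) ->
  count (fun i => P i && Q i) l + count (fun i => P' i && Q i) l = count Q l.
Proof.
elim: l => //= x l IH H.
have Hx := H x (mem_head _ _).
rewrite -IH; last by move=> i Hi; apply: H; rewrite in_cons Hi orbT.
by case: (P x) (P' x) (Q x) Hx => [] [] [] //= _; lia.
Qed.

Section Aux.
Context {d : Order.disp_t} (X : finPOrderType d).
Local Open Scope order_scope.

Lemma closed_count (u0 : X) (s : seq X) (a : X) : last u0 s = u0 ->
  count (fun i => nth u0 (u0::s) i == a) (iota 0 (size s)) =
  count (fun i => nth u0 (u0::s) i.+1 == a) (iota 0 (size s)).
Proof.
move=> Hl.
have -> : count (fun i => nth u0 (u0::s) i == a) (iota 0 (size s)) =
  count (pred1 a) (map (nth u0 (u0::s)) (iota 0 (size s))) by rewrite count_map.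
have -> : count (fun i => nth u0 (u0::s) i.+1 == a) (iota 0 (size s)) =
  count (pred1 a) (map (nth u0 s) (iota 0 (size s))) by rewrite count_map.
rewrite map_nth_iota0 // map_nth_iota0 /=; last by [].
rewrite take_size.
have E := lastI u0 s.
have Hc : count (pred1 a) (u0 :: s) = count (pred1 a) (rcons (belast u0 s) (last u0 s)) by rewrite -E.
rewrite E -cats1 take_size_cat ?size_belast //.
move: Hc; rewrite -cats1 count_cat /= Hl; lia.
Qed.

Lemma adj_xor (x y : X) : adj x y -> (x < y) (+) (y < x).
Proof.
rewrite /adj /covers => /orP[]/andP[h _]; move: (lt_asym x y); rewrite h /= ?andbT => -> //.
Qed.

Lemma walk_xor (u0 : X) (s : seq X) i : walk u0 s -> i \in iota 0 (size s) ->
  step_up u0 s i (+) step_down u0 s i.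
Proof.
move=> /(pathP u0) H; rewrite mem_iota /= => /H hi.
exact: adj_xor.
Qed.

End Aux.

Section Ex.
Context {d : Order.disp_t} (X : finPOrderType d).
Local Open Scope order_scope.
Variables (theta : B X -> B X) (lam g : X -> X).
Hypothesis lg : cancel lam g.
Hypothesis gl : cancel g lam.

Section Auto.
Hypothesis Hlt : forall x y : X, (x < y) = (lam x < lam y).
Hypothesis Ht : forall b : B X, val (theta b) = (lam (val b).1, lam (val b).2).

Lemma exA1 (p q z : X) : p < q ->
  [exists b : B X, ((val b).1 == z) && (val (theta b) == (p, q))] = (p == lam z).
Proof.
move=> pq; apply/existsP/eqP.
- by case=> b /andP[/eqP bz /eqP]; rewrite Ht bz => -[<- _].
- move=> pz.
  have h : (z, g q).1 < (z, g q).2 by rewrite /= Hlt gl -pz.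
  by exists (exist _ (z, g q) h : B X); rewrite /= eqxx /= Ht /= -pz gl eqxx.
Qed.

Lemma exA2 (p q z : X) : p < q ->
  [exists b : B X, ((val b).2 == z) && (val (theta b) == (p, q))] = (q == lam z).
Proof.
move=> pq; apply/existsP/eqP.
- by case=> b /andP[/eqP bz /eqP]; rewrite Ht bz => -[_ <-].
- move=> qz.
  have h : (g p, z).1 < (g p, z).2 by rewrite /= Hlt gl -qz.
  by exists (exist _ (g p, z) h : B X); rewrite /= eqxx /= Ht /= -qz gl eqxx.
Qed.
End Auto.

Section Anti.
Hypothesis Hlt : forall x y : X, (x < y) = (lam y < lam x).
Hypothesis Ht : forall b : B X, val (theta b) = (lam (val b).2, lam (val b).1).

Lemma exN1 (p q z : X) : p < q ->
  [exists b : B X, ((val b).1 == z) && (val (theta b) == (p, q))] = (q == lam z).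
Proof.
move=> pq; apply/existsP/eqP.
- by case=> b /andP[/eqP bz /eqP]; rewrite Ht bz => -[_ <-].
- move=> qz.
  have h : (z, g p).1 < (z, g p).2 by rewrite /= Hlt gl -qz.
  by exists (exist _ (z, g p) h : B X); rewrite /= eqxx /= Ht /= -qz gl eqxx.
Qed.

Lemma exN2 (p q z : X) : p < q ->
  [exists b : B X, ((val b).2 == z) && (val (theta b) == (p, q))] = (p == lam z).
Proof.
move=> pq; apply/existsP/eqP.
- by case=> b /andP[/eqP bz /eqP]; rewrite Ht bz => -[<- _].
- move=> pz.
  have h : (g q, z).1 < (g q, z).2 by rewrite /= Hlt gl -pz.
  by exists (exist _ (g q, z) h : B X); rewrite /= eqxx /= Ht /= -pz gl eqxx.
Qed.
End Anti.
End Ex.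

Theorem proposition2p5 (d : Order.disp_t) (X : finPOrderType d) :
  connected_poset X -> forall theta : B X -> B X, in_P theta -> in_AM theta.
Proof.
move=> _ theta [bij [[lam [[lbij Hle] Ht]] | [lam [[lbij Hle] Ht]]]];
  case: lbij => g lg gl.
- have Hlt : forall x y : X, (x < y)%O = (lam x < lam y)%O.
    by move=> x y; rewrite !lt_def Hle (inj_eq (can_inj lg)).
  split; first split => //.
  + move=> C [HC Hmax]; left; exists (map lam C); split; [split|split].
    * by rewrite /chain sorted_map; apply: sub_sorted HC => x y /=; rewrite -Hlt.
    * move=> t Ht' Hsub y yt.
      have : g y \in C.
        apply: (Hmax (map g t)); last exact: map_f.
        - by rewrite /chain sorted_map; apply: sub_sorted Ht' => a b /=; rewrite [(g a < _)%O]Hlt !gl.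
        - by move=> x xC; have := Hsub (lam x) (map_f lam xC); rewrite -{2}[x]lg; apply: map_f.
      by move=> gC; rewrite -[y]gl map_f.
    * by rewrite size_map.
    * move=> i j b /andP[ij jC]; rewrite Ht; case: b => [[p q] pq] /= [Hp Hq].
      by rewrite !(nth_map p) -?Hp -?Hq //; apply: ltn_trans ij jC.
  + move=> u0 s /andP[Hw /eqP Hl] z.
    have e1 : s_plus theta u0 s z = count (fun i => step_up u0 s i && (nth u0 (u0::s) i == lam z)) (iota 0 (size s)).
      by apply: eq_in_count => i _ /=; case h: (step_up u0 s i) => //=; exact (@exA1 _ X theta lam g gl Hlt Ht _ _ z h).
    have e2 : s_minus theta u0 s z = count (fun i => step_down u0 s i && (nth u0 (u0::s) i.+1 == lam z)) (iota 0 (size s)).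
      by apply: eq_in_count => i _ /=; case h: (step_down u0 s i) => //=; exact (@exA1 _ X theta lam g gl Hlt Ht _ _ z h).
    have e3 : t_plus theta u0 s z = count (fun i => step_up u0 s i && (nth u0 (u0::s) i.+1 == lam z)) (iota 0 (size s)).
      by apply: eq_in_count => i _ /=; case h: (step_up u0 s i) => //=; exact (@exA2 _ X theta lam g gl Hlt Ht _ _ z h).
    have e4 : t_minus theta u0 s z = count (fun i => step_down u0 s i && (nth u0 (u0::s) i == lam z)) (iota 0 (size s)).
      by apply: eq_in_count => i _ /=; case h: (step_down u0 s i) => //=; exact (@exA2 _ X theta lam g gl Hlt Ht _ _ z h).
    have c1 : count (fun i => step_up u0 s i && (nth u0 (u0::s) i == lam z)) (iota 0 (size s)) + count (fun i => step_down u0 s i && (nth u0 (u0::s) i == lam z)) (iota 0 (size s)) = count (fun i => nth u0 (u0::s) i == lam z) (iota 0 (size s)).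
      by apply: count_split => i Hi; exact: (@walk_xor _ X u0 s i Hw Hi).
    have c2 : count (fun i => step_up u0 s i && (nth u0 (u0::s) i.+1 == lam z)) (iota 0 (size s)) + count (fun i => step_down u0 s i && (nth u0 (u0::s) i.+1 == lam z)) (iota 0 (size s)) = count (fun i => nth u0 (u0::s) i.+1 == lam z) (iota 0 (size s)).
      by apply: count_split => i Hi; exact: (@walk_xor _ X u0 s i Hw Hi).
    have c3 := @closed_count _ X u0 s (lam z) Hl.
    rewrite e1 e2 e3 e4; lia.
- have Hlt : forall x y : X, (x < y)%O = (lam y < lam x)%O.
    by move=> x y; rewrite !lt_def Hle (inj_eq (can_inj lg)) eq_sym.
  split; first split => //.
  + move=> C [HC Hmax]; right; exists (rev (map lam C)); split; [split|split].
    * by rewrite /chain rev_sorted sorted_map; apply: sub_sorted HC => x y /=; rewrite -Hlt.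
    * move=> t Ht' Hsub y yt.
      have : g y \in C.
        apply: (Hmax (rev (map g t))); last by rewrite mem_rev map_f.
        - by rewrite /chain rev_sorted sorted_map; apply: sub_sorted Ht' => a b /=; rewrite [(g b < _)%O]Hlt !gl.
        - move=> x xC; have : lam x \in t by apply: Hsub; rewrite mem_rev map_f.
          by rewrite mem_rev -{2}[x]lg; apply: map_f.
      by move=> gC; rewrite mem_rev -[y]gl map_f.
    * by rewrite size_rev size_map.
    * move=> i j b /andP[ij jC]; rewrite Ht; case: b => [[p q] pq] /= [Hp Hq].
      have ij' : i < j := ij. have jC' : j < size C := jC.
      rewrite !nth_rev size_map; try lia.
      have -> : size C - (size C - 1 - j).+1 = j by lia.
      have -> : size C - (size C - 1 - i).+1 = i by lia.
      by rewrite !(nth_map p) -?Hp -?Hq //; lia.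
  + move=> u0 s /andP[Hw /eqP Hl] z.
    have e1 : s_plus theta u0 s z = count (fun i => step_up u0 s i && (nth u0 (u0::s) i.+1 == lam z)) (iota 0 (size s)).
      by apply: eq_in_count => i _ /=; case h: (step_up u0 s i) => //=; exact (@exN1 _ X theta lam g gl Hlt Ht _ _ z h).
    have e2 : s_minus theta u0 s z = count (fun i => step_down u0 s i && (nth u0 (u0::s) i == lam z)) (iota 0 (size s)).
      by apply: eq_in_count => i _ /=; case h: (step_down u0 s i) => //=; exact (@exN1 _ X theta lam g gl Hlt Ht _ _ z h).
    have e3 : t_plus theta u0 s z = count (fun i => step_up u0 s i && (nth u0 (u0::s) i == lam z)) (iota 0 (size s)).
      by apply: eq_in_count => i _ /=; case h: (step_up u0 s i) => //=; exact (@exN2 _ X theta lam g gl Hlt Ht _ _ z h).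
    have e4 : t_minus theta u0 s z = count (fun i => step_down u0 s i && (nth u0 (u0::s) i.+1 == lam z)) (iota 0 (size s)).
      by apply: eq_in_count => i _ /=; case h: (step_down u0 s i) => //=; exact (@exN2 _ X theta lam g gl Hlt Ht _ _ z h).
    have c1 : count (fun i => step_up u0 s i && (nth u0 (u0::s) i == lam z)) (iota 0 (size s)) + count (fun i => step_down u0 s i && (nth u0 (u0::s) i == lam z)) (iota 0 (size s)) = count (fun i => nth u0 (u0::s) i == lam z) (iota 0 (size s)).
      by apply: count_split => i Hi; exact: (@walk_xor _ X u0 s i Hw Hi).
    have c2 : count (fun i => step_up u0 s i && (nth u0 (u0::s) i.+1 == lam z)) (iota 0 (size s)) + count (fun i => step_down u0 s i && (nth u0 (u0::s) i.+1 == lam z)) (iota 0 (size s)) = count (fun i => nth u0 (u0::s) i.+1 == lam z) (iota 0 (size s)).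
      by apply: count_split => i Hi; exact: (@walk_xor _ X u0 s i Hw Hi).
    have c3 := @closed_count _ X u0 s (lam z) Hl.
    rewrite e1 e2 e3 e4; lia.
Qed.
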